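(* For every set of formulas $\Gamma$ and formula $\varphi$: (1) $\Gamma\vdash_{\mathsf{NeL}+\{\mathrm{(DI)}^s\}}\varphi$ iff $\Gamma\models_{\mathfrak{N}_w^{d}}\varphi$; (2) $\Gamma\vdash_{\mathsf{NeL}^{\mathrm{as}}+\{\mathrm{(DI)}^s\}}\varphi$ iff $\Gamma\models_{\mathfrak{N}^{d}}\varphi$; (3) $\varphi$ is a theorem of $\mathsf{NL}+\{\mathrm{(DI)}\}$ iff $\models_{\mathfrak{N}_w^{d}}\varphi$; (4) $\varphi$ is a theorem of $\mathsf{NL}^{\mathrm{as}}+\{\mathrm{(DI)}\}$ iff $\models_{\mathfrak{N}^{d}}\varphi$.
   Context: Formulas are built from a countably infinite set of variables using binary $\otimes,\circ$ and unary ${}^{*}$; $\mathbf{Fm}$ is the formula algebra. Abbreviations (also term operations): $\varphi\Rightarrow\psi:=(\varphi\circ\psi^{*})^{*}$; $\varphi\Leftrightarrow\psi:=(\varphi\Rightarrow\psi)\otimes(\psi\Rightarrow\varphi)$; $\varphi\not\Leftrightarrow\psi:=(\varphi\Leftrightarrow\psi)^{*}$; $\varphi\not\Leftrightarrow\psi\not\Leftrightarrow\chi:=((\varphi\not\Leftrightarrow\psi)\otimes(\varphi\not\Leftrightarrow\chi))\otimes(\psi\not\Leftrightarrow\chi)$; $\varphi\oplus\psi:=(\varphi^{*}\otimes\psi^{*})^{*}$. Axiom schemes: (A1) $\varphi\Rightarrow\varphi$; (A2) $(\varphi\circ\psi)\Rightarrow(\psi\circ\varphi)$; (A3) $\varphi\Rightarrow\varphi^{**}$;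 (A4) $(\varphi\Rightarrow\psi)\Rightarrow(\varphi\circ\psi)$; (A5) $(\varphi\otimes\psi)\Leftrightarrow(\psi\otimes\varphi)$; (A6) $((\varphi\otimes\psi)\Rightarrow\chi)\Rightarrow((\varphi\otimes\chi^{*})\Rightarrow\psi^{*})$; (A7) $(\varphi\not\Leftrightarrow\psi\not\Leftrightarrow\chi)\Rightarrow((\varphi\Rightarrow\psi)\Rightarrow((\psi\Rightarrow\chi)\Rightarrow(\varphi\Rightarrow\chi)))$. $\mathsf{NL}$ has these axioms and rules applicable only to theorems: from theorems $\varphi\Rightarrow\psi$, $\varphi$ infer $\psi$; from theorems $\varphi,\psi$ infer $\varphi\otimes\psi$; from theorems $\varphi\Leftrightarrow\psi$ and $\chi$ infer $\chi'$ ($\chi'$ from $\chi$ replacing one or more occurrences of $\varphi$ by $\psi$); from a theorem $\varphi\otimes\psi$ infer $\varphi$. $\mathsf{NeL}$ has the same axioms and the same rules applicable to arbitrary formulas, with $\Gamma\vdash_{\mathsf{NeL}}\varphi$ meaning derivability from $\Gamma$. The superscript ''as'' means adding axiom schemes $(\varphi\otimes\psi)\otimes\chi\Rightarrow\varphi\otimes(\psi\otimes\chi)$ and $\varphi\otimes(\psi\otimes\chi)\Rightarrow(\varphi\otimes\psi)\otimes\chi$. (DI): from a theorem $\varphi$ infer $\varphi\oplus\psi$; $\mathrm{(DI)}^s$: the rule $\varphi/\varphi\oplus\psi$ for arbitrary formulas. A weak $\mathcal{N}$-algebra is an algebra $(A,\otimes,\circ,{}^{*})$ of type $(2,2,1)$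 with $\otimes,\circ$ commutative, $x^{**}=x$, $(x\otimes y)\circ z=(x\otimes z)\circ y$; an $\mathcal{N}$-algebra has in addition $\otimes$ associative. With $\mathsf{t}\ne\mathsf{f}$ symbols not in $A$, $\overline A=A\cup\{\mathsf{t},\mathsf{f}\}$, an $\mathfrak{N}_w$-model is $(\mathbf A,\perp,\{\mathsf{t},\mathsf{f}\})$, $\mathbf A$ a weak $\mathcal{N}$-algebra, $\perp\subseteq\overline A\times\overline A$, such that for all $x,y,z\in A$: (a) $x\perp x^{*}$; (b) $x\perp y^{*}$ and $y\perp x^{*}$ imply $x=y$; (c) $x\perp y$ iff $x\circ y\perp\mathsf{t}$; (d) $x\perp\mathsf{t}$ iff $x^{*}\perp\mathsf{f}$; (e) $x\perp\mathsf{f}$ and $y\perp\mathsf{f}$ iff $x\otimes y\perp\mathsf{f}$; (f) $(x\circ y^{*})^{*}\perp(x\circ y)^{*}$; (g) $x\perp y$ and $x\perp\mathsf{f}$ imply $y\perp\mathsf{t}$; (h) $(x\not\Leftrightarrow y\not\Leftrightarrow z)\perp((x\Rightarrow y)\Rightarrow((y\Rightarrow z)\Rightarrow(x\Rightarrow z)))^{*}$. $\mathfrak{N}_w^{d}$ ($\mathfrak{N}^{d}$) is the class of $\mathfrak{N}_w$-models (with $\mathbf A$ an $\mathcal{N}$-algebra) satisfying: for all $x,y\in A$, $x\perp\mathsf{f}$ implies $x\oplus y\perp\mathsf{f}$. $F_\perp=\{a\in A:a\perp\mathsf{f}\}$. For a class $K$: $\Gamma\models_K\varphi$ iff there is a finite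 $\Gamma'\subseteq\Gamma$ such that for all models in $K$ and homomorphisms $h:\mathbf{Fm}\to\mathbf A$, $h(\Gamma')\subseteq F_\perp$ implies $h(\varphi)\in F_\perp$; $\models_K\varphi$ iff $h(\varphi)\perp\mathsf{f}$ for all models in $K$ and all $h$. *)

(* Defs.v *)
From Stdlib Require Import List.
Import ListNotations.
Set Implicit Arguments.

Inductive form : Type :=
| Var : nat -> form
| Ot : form -> form -> form      (* ⊗ *)
| Ci : form -> form -> form      (* ∘ *)
| St : form -> form.             (* ^* *)

Definition fImp (p q : form) : form := St (Ci p (St q)).
Definition fIff (p q : form) : form := Ot (fImp p q) (fImp q p).
Definition fNIff (p q : form) : form := St (fIff p q).
Definition fNIff3 (p q r : form) : form :=
  Ot (Ot (fNIff p q) (fNIff p r)) (fNIff q r).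
Definition fOplus (p q : form) : form := St (Ot (St p) (St q)).

(** [repl0 p q c c']: c' is obtained from c by replacing zero or more
    occurrences of p by q;  [repl1]: one or more occurrences. *)
Inductive repl0 (p q : form) : form -> form -> Prop :=
| r0_refl c : repl0 p q c c
| r0_here : repl0 p q p q
| r0_ot a a' b b' : repl0 p q a a' -> repl0 p q b b' -> repl0 p q (Ot a b) (Ot a' b')
| r0_ci a a' b b' : repl0 p q a a' -> repl0 p q b b' -> repl0 p q (Ci a b) (Ci a' b')
| r0_st a a' : repl0 p q a a' -> repl0 p q (St a) (St a').

Inductive repl1 (p q : form) : form -> form -> Prop :=
| r1_here : repl1 p q p q
| r1_otl a a' b b' : repl1 p q a a' -> repl0 p q b b' -> repl1 p q (Ot a b) (Ot a' b')
| r1_otr a a' b b' : repl0 p q a a' -> repl1 p q b b' -> repl1 p q (Ot a b) (Ot a' b')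
| r1_cil a a' b b' : repl1 p q a a' -> repl0 p q b b' -> repl1 p q (Ci a b) (Ci a' b')
| r1_cir a a' b b' : repl0 p q a a' -> repl1 p q b b' -> repl1 p q (Ci a b) (Ci a' b')
| r1_st a a' : repl1 p q a a' -> repl1 p q (St a) (St a').

Inductive axiom (as_ : bool) : form -> Prop :=
| A1 p : axiom as_ (fImp p p)
| A2 p q : axiom as_ (fImp (Ci p q) (Ci q p))
| A3 p : axiom as_ (fImp p (St (St p)))
| A4 p q : axiom as_ (fImp (fImp p q) (Ci p q))
| A5 p q : axiom as_ (fIff (Ot p q) (Ot q p))
| A6 p q r : axiom as_ (fImp (fImp (Ot p q) r) (fImp (Ot p (St r)) (St q)))
| A7 p q r : axiom as_ (fImp (fNIff3 p q r)
                         (fImp (fImp p q) (fImp (fImp q r) (fImp p r))))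
| Aas1 p q r : as_ = true -> axiom as_ (fImp (Ot (Ot p q) r) (Ot p (Ot q r)))
| Aas2 p q r : as_ = true -> axiom as_ (fImp (Ot p (Ot q r)) (Ot (Ot p q) r)).

(** [NeL_DIs as_ G p]: G |- p in NeL + (DI)^s (as_ = false) or
    NeL^as + (DI)^s (as_ = true); rules apply to arbitrary formulas. *)
Inductive NeL_DIs (as_ : bool) (G : form -> Prop) : form -> Prop :=
| e_hyp p : G p -> NeL_DIs as_ G p
| e_ax p : axiom as_ p -> NeL_DIs as_ G p
| e_mp p q : NeL_DIs as_ G (fImp p q) -> NeL_DIs as_ G p -> NeL_DIs as_ G q
| e_adj p q : NeL_DIs as_ G p -> NeL_DIs as_ G q -> NeL_DIs as_ G (Ot p q)
| e_repl p q c c' : NeL_DIs as_ G (fIff p q) -> NeL_DIs as_ G c ->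
    repl1 p q c c' -> NeL_DIs as_ G c'
| e_ote p q : NeL_DIs as_ G (Ot p q) -> NeL_DIs as_ G p
| e_di p q : NeL_DIs as_ G p -> NeL_DIs as_ G (fOplus p q).

(** [NL_DI as_ p]: p is a theorem of NL + (DI) (resp. NL^as + (DI));
    rules apply only to theorems. *)
Inductive NL_DI (as_ : bool) : form -> Prop :=
| t_ax p : axiom as_ p -> NL_DI as_ p
| t_mp p q : NL_DI as_ (fImp p q) -> NL_DI as_ p -> NL_DI as_ q
| t_adj p q : NL_DI as_ p -> NL_DI as_ q -> NL_DI as_ (Ot p q)
| t_repl p q c c' : NL_DI as_ (fIff p q) -> NL_DI as_ c ->
    repl1 p q c c' -> NL_DI as_ c'
| t_ote p q : NL_DI as_ (Ot p q) -> NL_DI as_ p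
| t_di p q : NL_DI as_ p -> NL_DI as_ (fOplus p q).

Record wNalg := {
  car :> Type;
  aot : car -> car -> car;
  aci : car -> car -> car;
  ast : car -> car;
  aot_comm : forall x y, aot x y = aot y x;
  aci_comm : forall x y, aci x y = aci y x;
  ast_inv : forall x, ast (ast x) = x;
  amix : forall x y z, aci (aot x y) z = aci (aot x z) y
}.

Arguments aot {w} _ _.
Arguments aci {w} _ _.
Arguments ast {w} _.

Section TermOps.
Variable A : wNalg.
Definition aImp (x y : A) : A := ast (aci x (ast y)).
Definition aIff (x y : A) : A := aot (aImp x y) (aImp y x).
Definition aNIff (x y : A) : A := ast (aIff x y).
Definition aNIff3 (x y z : A) : A := aot (aot (aNIff x y) (aNIff x z)) (aNIff y z).
Definition aOplus (x y : A) : A := ast (aot (ast x) (ast y)).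
End TermOps.
Arguments aOplus {A} _ _.
Arguments aImp {A} _ _.
Arguments aNIff3 {A} _ _ _.


(** \overline A = A ∪ {t, f} *)
Inductive ext (A : Type) : Type :=
| inA : A -> ext A
| tt_ : ext A
| ff_ : ext A.
Arguments tt_ {A}.
Arguments ff_ {A}.

Record Nwmodel := {
  alg : wNalg;
  perp : ext alg -> ext alg -> Prop;
  m_a : forall x : alg, perp (inA x) (inA (ast x));
  m_b : forall x y : alg, perp (inA x) (inA (ast y)) -> perp (inA y) (inA (ast x)) -> x = y;
  m_c : forall x y : alg, perp (inA x) (inA y) <-> perp (inA (aci x y)) tt_;
  m_d : forall x : alg, perp (inA x) tt_ <-> perp (inA (ast x)) ff_;
  m_e : forall x y : alg, (perp (inA x) ff_ /\ perp (inA y) ff_) <-> perp (inA (aot x y)) ff_;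
  m_f : forall x y : alg, perp (inA (ast (aci x (ast y)))) (inA (ast (aci x y)));
  m_g : forall x y : alg, perp (inA x) (inA y) -> perp (inA x) ff_ -> perp (inA y) tt_;
  m_h : forall x y z : alg,
      perp (inA (aNIff3 x y z))
           (inA (ast (aImp (aImp x y) (aImp (aImp y z) (aImp x z)))))
}.

Definition Fperp (M : Nwmodel) (a : alg M) : Prop := perp M (inA a) ff_.

Definition in_Nwd (M : Nwmodel) : Prop :=
  forall x y : alg M, perp M (inA x) ff_ -> perp M (inA (aOplus x y)) ff_.

Definition in_Nd (M : Nwmodel) : Prop :=
  (forall x y z : alg M, aot x (aot y z) = aot (aot x y) z) /\ in_Nwd M.

Definition is_hom (A : wNalg) (h : form -> A) : Prop :=
  (forall p q, h (Ot p q) = aot (h p) (h q)) /\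
  (forall p q, h (Ci p q) = aci (h p) (h q)) /\
  (forall p, h (St p) = ast (h p)).

Arguments is_hom {A} _.

Definition conseq (K : Nwmodel -> Prop) (G : form -> Prop) (p : form) : Prop :=
  exists G' : list form, (forall g, In g G' -> G g) /\
    forall M : Nwmodel, K M -> forall h : form -> alg M, is_hom h ->
      (forall g, In g G' -> Fperp M (h g)) -> Fperp M (h p).

Definition valid (K : Nwmodel -> Prop) (p : form) : Prop :=
  forall M : Nwmodel, K M -> forall h : form -> alg M, is_hom h -> Fperp M (h p).

(* Main.v *)
Require Import Defs.
From Stdlib Require Import List ClassicalEpsilon FunctionalExtensionality PropExtensionality ProofIrrelevance.
Import ListNotations.

Lemma repl1_0 p q c c' : repl1 p q c c' -> repl0 p q c c'.
Proof. induction 1; eauto using repl0. Qed.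

Lemma repl0_1 p q c c' : repl0 p q c c' -> c = c' \/ repl1 p q c c'.
Proof.
  induction 1; auto using repl1.
  - destruct IHrepl0_1 as [->|]; destruct IHrepl0_2 as [->|]; auto;
      right; eauto using repl1.
  - destruct IHrepl0_1 as [->|]; destruct IHrepl0_2 as [->|]; auto;
      right; eauto using repl1.
  - destruct IHrepl0 as [->|]; auto; right; auto using repl1.
Qed.

Definition EE as_ G a b := NeL_DIs as_ G (fIff a b).

Lemma d_refl as_ G p : EE as_ G p p.
Proof. apply e_adj; apply e_ax, A1. Qed.

Lemma d_sym as_ G p q : EE as_ G p q -> EE as_ G q p.
Proof.
  intro H. unfold EE, fIff in *.
  eapply e_mp; [| exact H].
  eapply e_ote. apply e_ax. apply (A5 as_ (fImp p q) (fImp q p)).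
Qed.

Lemma d_tr as_ G p q : EE as_ G p q -> NeL_DIs as_ G p -> NeL_DIs as_ G q.
Proof. intros H1 H2. eapply e_repl; [exact H1| exact H2| apply r1_here]. Qed.

Lemma d_trans as_ G p q r : EE as_ G p q -> EE as_ G q r -> EE as_ G p r.
Proof.
  intros H1 H2. apply d_sym in H1. unfold EE in *.
  eapply e_repl; [exact H1 | exact H2 |].
  unfold fIff, fImp.
  apply r1_otl; [apply r1_st, r1_cil; [apply r1_here| apply r0_refl]|].
  apply r0_st, r0_ci; [apply r0_refl| apply r0_st, r0_here].
Qed.

Lemma d_cong as_ G p q c c' : EE as_ G p q -> repl0 p q c c' -> EE as_ G c c'.
Proof.
  intros H R. destruct (repl0_1 _ _ _ _ R) as [->|R1]; [apply d_refl|].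
  unfold EE. eapply e_repl; [exact H | apply (d_refl as_ G c) |].
  unfold fIff, fImp.
  apply r1_otl.
  - apply r1_st, r1_cir; [apply r0_refl| apply r1_st, R1].
  - apply r0_st, r0_ci; [apply repl1_0, R1 | apply r0_refl].
Qed.

Lemma E_Ot as_ G a a' b b' : EE as_ G a a' -> EE as_ G b b' -> EE as_ G (Ot a b) (Ot a' b').
Proof.
  intros H1 H2. eapply d_trans.
  - eapply d_cong; [exact H1|]. apply r0_ot; [apply r0_here| apply r0_refl].
  - eapply d_cong; [exact H2|]. apply r0_ot; [apply r0_refl| apply r0_here].
Qed.

Lemma E_Ci as_ G a a' b b' : EE as_ G a a' -> EE as_ G b b' -> EE as_ G (Ci a b) (Ci a' b').
Proof.
  intros H1 H2. eapply d_trans.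
  - eapply d_cong; [exact H1|]. apply r0_ci; [apply r0_here| apply r0_refl].
  - eapply d_cong; [exact H2|]. apply r0_ci; [apply r0_refl| apply r0_here].
Qed.

Lemma E_St as_ G a a' : EE as_ G a a' -> EE as_ G (St a) (St a').
Proof. intros H1. eapply d_cong; [exact H1|]. apply r0_st, r0_here. Qed.

Lemma E_Ci_comm as_ G a b : EE as_ G (Ci a b) (Ci b a).
Proof. apply e_adj; apply e_ax, A2. Qed.

Lemma E_Ot_comm as_ G a b : EE as_ G (Ot a b) (Ot b a).
Proof. apply e_ax, A5. Qed.

Lemma E_dst as_ G p : EE as_ G (St (St p)) p.
Proof.
  apply d_sym. apply e_adj; [apply e_ax, A3|].
  unfold fImp.
  eapply d_tr; [| apply e_ax, (A1 as_ (St p))].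
  unfold fImp. apply E_St, E_Ci_comm.
Qed.

Lemma E_imp as_ G a a' b b' : EE as_ G a a' -> EE as_ G b b' -> EE as_ G (fImp a b) (fImp a' b').
Proof. intros. unfold fImp. auto using E_St, E_Ci. Qed.

Lemma E_mix as_ G x y z : EE as_ G (Ci (Ot x y) z) (Ci (Ot x z) y).
Proof.
  assert (K : forall x y z, NeL_DIs as_ G (fImp (St (Ci (Ot x y) z)) (St (Ci (Ot x z) y)))).
  { intros x0 y0 z0. eapply d_tr; [| apply e_ax, (A6 as_ x0 y0 (St z0))].
    apply E_imp; unfold fImp.
    - apply E_St, E_Ci; [apply d_refl| apply E_dst].
    - apply E_St, E_Ci; [apply E_Ot; [apply d_refl| apply E_dst]| apply E_dst]. }
  assert (H : EE as_ G (St (Ci (Ot x y) z)) (St (Ci (Ot x z) y))) by (apply e_adj; apply K).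
  apply E_St in H.
  eapply d_trans; [apply d_sym, E_dst|].
  eapply d_trans; [exact H| apply E_dst].
Qed.

Lemma imp_F (M : Nwmodel) (x y : alg M) :
  Fperp M (aImp x y) <-> perp M (inA x) (inA (ast y)).
Proof.
  unfold Fperp, aImp. rewrite <- m_d, <- m_c. tauto.
Qed.

Lemma iff_eq (M : Nwmodel) (x y : alg M) :
  perp M (inA (aot (aImp x y) (aImp y x))) ff_ -> x = y.
Proof.
  intro H. apply m_e in H as [H1 H2].
  apply (imp_F M) in H1. apply (imp_F M) in H2. apply m_b; auto.
Qed.

Lemma repl_eq (M : Nwmodel) (h : form -> alg M) p q : is_hom h -> h p = h q ->
  forall c c', repl0 p q c c' -> h c = h c'.
Proof.
  intros [H1 [H2 H3]] E. induction 1; congruence.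
Qed.

Lemma repl1_0' p q c c' : repl1 p q c c' -> repl0 p q c c'.
Proof. induction 1; eauto using repl0. Qed.

Lemma h_imp (M : Nwmodel) (h : form -> alg M) a b : is_hom h -> h (fImp a b) = aImp (h a) (h b).
Proof. intros [H1 [H2 H3]]. unfold fImp, aImp. rewrite H3, H2, H3. reflexivity. Qed.

Lemma h_iff (M : Nwmodel) (h : form -> alg M) a b : is_hom h -> h (fIff a b) = aIff _ (h a) (h b).
Proof. intros Hh. unfold fIff, aIff. rewrite (proj1 Hh), !h_imp by auto. reflexivity. Qed.

Lemma h_niff3 (M : Nwmodel) (h : form -> alg M) a b c : is_hom h -> h (fNIff3 a b c) = aNIff3 (h a) (h b) (h c).
Proof. intros Hh. unfold fNIff3, aNIff3, fNIff, aNIff. rewrite !(proj1 Hh), !(proj2 (proj2 Hh)), !h_iff by auto. reflexivity. Qed.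

Lemma ax_sound as_ (M : Nwmodel) (h : form -> alg M) p :
  (as_ = true -> forall x y z : alg M, aot x (aot y z) = aot (aot x y) z) ->
  is_hom h -> axiom as_ p -> Fperp M (h p).
Proof.
  intros Has Hh Ax. pose proof Hh as [H1 [H2 H3]].
  destruct Ax; rewrite ?h_iff, ?h_niff3, ?h_imp by auto; rewrite ?H1, ?H2, ?H3, ?h_imp by auto.
  - apply imp_F, m_a.
  - apply imp_F. rewrite (aci_comm _ (h q)). apply m_a.
  - apply imp_F. rewrite ast_inv. apply m_a.
  - apply imp_F. apply m_f.
  - apply m_e. rewrite (aot_comm _ (h q) (h p)). split; apply imp_F, m_a.
  - apply imp_F. unfold aImp. rewrite !ast_inv. rewrite (amix _ (h p) (ast (h r)) (h q)). rewrite <- (ast_inv _ (aci (aot (h p) (h q)) (ast (h r)))) at 2. apply m_a.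
  - apply imp_F. rewrite h_niff3 by auto. apply m_h.
  - apply imp_F. rewrite Has by auto. apply m_a.
  - apply imp_F. rewrite Has by auto. apply m_a.
Qed.

Lemma sound as_ (K : Nwmodel -> Prop) G p :
  (forall M, K M -> in_Nwd M) ->
  (as_ = true -> forall M, K M -> forall x y z : alg M, aot x (aot y z) = aot (aot x y) z) ->
  NeL_DIs as_ G p -> conseq K G p.
Proof.
  intros HK1 HK2 D. unfold conseq.
  induction D as [p Hp|p Ax|p q _ [L1 [I1 S1]] _ [L2 [I2 S2]]|p q _ [L1 [I1 S1]] _ [L2 [I2 S2]]
     |p q c c' _ [L1 [I1 S1]] _ [L2 [I2 S2]] R|p q _ [L1 [I1 S1]]|p q _ [L1 [I1 S1]]].
  - exists [p]. split. { intros g [->|[]]; auto. } intros M _ h _ Hg. apply Hg; simpl; auto.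
  - exists []. split. { intros g []. } intros M KM h Hh _. eapply ax_sound; eauto.
  - exists (L1 ++ L2). split. { intros g Hg; apply in_app_or in Hg as [|]; auto. }
    intros M KM h Hh Hg.
    assert (A1 := S1 M KM h Hh (fun g H => Hg g (in_or_app _ _ _ (or_introl H)))).
    assert (A2 := S2 M KM h Hh (fun g H => Hg g (in_or_app _ _ _ (or_intror H)))).
    rewrite h_imp in A1 by auto. apply imp_F in A1.
    unfold Fperp in *. pose proof (m_g M _ _ A1 A2) as A3. apply m_d in A3. rewrite ast_inv in A3. exact A3.
  - exists (L1 ++ L2). split. { intros g Hg; apply in_app_or in Hg as [|]; auto. }
    intros M KM h Hh Hg.
    assert (A1 := S1 M KM h Hh (fun g H => Hg g (in_or_app _ _ _ (or_introl H)))).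
    assert (A2 := S2 M KM h Hh (fun g H => Hg g (in_or_app _ _ _ (or_intror H)))).
    unfold Fperp. rewrite (proj1 Hh). apply m_e. auto.
  - exists (L1 ++ L2). split. { intros g Hg; apply in_app_or in Hg as [|]; auto. }
    intros M KM h Hh Hg.
    assert (A1 := S1 M KM h Hh (fun g H => Hg g (in_or_app _ _ _ (or_introl H)))).
    assert (A2 := S2 M KM h Hh (fun g H => Hg g (in_or_app _ _ _ (or_intror H)))).
    rewrite h_iff in A1 by auto. apply iff_eq in A1.
    rewrite <- (repl_eq M h p q Hh A1 c c' (repl1_0' _ _ _ _ R)). exact A2.
  - exists L1. split; auto. intros M KM h Hh Hg.
    assert (A1 := S1 M KM h Hh Hg). unfold Fperp in *. rewrite (proj1 Hh) in A1.
    apply m_e in A1. tauto.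
  - exists L1. split; auto. intros M KM h Hh Hg.
    assert (A1 := S1 M KM h Hh Hg). unfold Fperp in *.
    unfold fOplus. rewrite (proj2 (proj2 Hh)), (proj1 Hh), !(proj2 (proj2 Hh)).
    apply (HK1 M KM). exact A1.
Qed.
Set Implicit Arguments.

Definition Q as_ G := { P : form -> Prop | exists a, P = EE as_ G a }.
Definition cls as_ G (a : form) : Q as_ G := exist _ (EE as_ G a) (ex_intro _ a eq_refl).
Definition rep as_ G (c : Q as_ G) : form := proj1_sig (constructive_indefinite_description _ (proj2_sig c)).

Lemma cls_rep as_ G c : cls as_ G (rep c) = c.
Proof.
  unfold rep. destruct (constructive_indefinite_description _ _) as [a Ha]. simpl.
  destruct c as [P HP]. simpl in Ha. subst P. unfold cls. f_equal. apply proof_irrelevance.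
Qed.

Lemma cls_eq as_ G a b : cls as_ G a = cls as_ G b <-> EE as_ G a b.
Proof.
  split.
  - intro H. apply (f_equal (@proj1_sig _ _)) in H. simpl in H. rewrite H. apply d_refl.
  - intro H. unfold cls. apply eq_sig_hprop. { intros. apply proof_irrelevance. }
    simpl. apply functional_extensionality; intro x. apply propositional_extensionality.
    split; intro K. { eapply d_trans; [apply d_sym, H| exact K]. }
    eapply d_trans; [exact H| exact K].
Qed.

Lemma rep_cls as_ G a : EE as_ G (rep (cls as_ G a)) a.
Proof. apply cls_eq. apply cls_rep. Qed.

Definition qot as_ G (c d : Q as_ G) := cls as_ G (Ot (rep c) (rep d)).
Definition qci as_ G (c d : Q as_ G) := cls as_ G (Ci (rep c) (rep d)).
Definition qst as_ G (c : Q as_ G) := cls as_ G (St (rep c)).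

Lemma qot_cls as_ G a b : qot (cls as_ G a) (cls as_ G b) = cls as_ G (Ot a b).
Proof. apply cls_eq. apply E_Ot; apply rep_cls. Qed.
Lemma qci_cls as_ G a b : qci (cls as_ G a) (cls as_ G b) = cls as_ G (Ci a b).
Proof. apply cls_eq. apply E_Ci; apply rep_cls. Qed.
Lemma qst_cls as_ G a : qst (cls as_ G a) = cls as_ G (St a).
Proof. apply cls_eq. apply E_St; apply rep_cls. Qed.

Ltac qdestr c := rewrite <- (cls_rep c); generalize (rep c); clear c; intro c.

Lemma qot_comm as_ G (x y : Q as_ G) : qot x y = qot y x.
Proof. qdestr x. qdestr y. rewrite !qot_cls. apply cls_eq, E_Ot_comm. Qed.
Lemma qci_comm as_ G (x y : Q as_ G) : qci x y = qci y x.
Proof. qdestr x. qdestr y. rewrite !qci_cls. apply cls_eq, E_Ci_comm. Qed.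
Lemma qst_inv as_ G (x : Q as_ G) : qst (qst x) = x.
Proof. qdestr x. rewrite !qst_cls. apply cls_eq, E_dst. Qed.
Lemma qmix as_ G (x y z : Q as_ G) : qci (qot x y) z = qci (qot x z) y.
Proof. qdestr x. qdestr y. qdestr z. rewrite !qot_cls, !qci_cls. apply cls_eq, E_mix. Qed.

Definition QA as_ G : wNalg :=
  {| car := Q as_ G; aot := @qot as_ G; aci := @qci as_ G; ast := @qst as_ G;
     aot_comm := @qot_comm as_ G; aci_comm := @qci_comm as_ G;
     ast_inv := @qst_inv as_ G; amix := @qmix as_ G |}.

Definition qperp as_ G (u v : ext (Q as_ G)) : Prop :=
  match u, v with
  | inA c, inA d => NeL_DIs as_ G (fImp (rep c) (St (rep d)))
  | inA c, tt_ => NeL_DIs as_ G (St (rep c))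
  | inA c, ff_ => NeL_DIs as_ G (rep c)
  | _, _ => False
  end.

Lemma EE_iff as_ G a b : EE as_ G a b -> (NeL_DIs as_ G a <-> NeL_DIs as_ G b).
Proof. intro H; split; apply d_tr; auto using d_sym. Qed.

Lemma qperp_AA as_ G a b : qperp (inA (cls as_ G a)) (inA (cls as_ G b)) <-> NeL_DIs as_ G (fImp a (St b)).
Proof. simpl. apply EE_iff. apply E_imp; [|apply E_St]; apply rep_cls. Qed.
Lemma qperp_At as_ G a : qperp (inA (cls as_ G a)) tt_ <-> NeL_DIs as_ G (St a).
Proof. simpl. apply EE_iff. apply E_St; apply rep_cls. Qed.
Lemma qperp_Af as_ G a : qperp (inA (cls as_ G a)) ff_ <-> NeL_DIs as_ G a.
Proof. simpl. apply EE_iff. apply rep_cls. Qed.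

Lemma dst_imp as_ G a b : NeL_DIs as_ G (fImp a (St (St b))) -> NeL_DIs as_ G (fImp a b).
Proof. apply d_tr. apply E_imp; [apply d_refl| apply E_dst]. Qed.

Lemma qm_a as_ G (x : Q as_ G) : qperp (inA x) (inA (qst x)).
Proof. qdestr x. rewrite qst_cls, qperp_AA. apply e_ax, A3. Qed.

Lemma qm_b as_ G (x y : Q as_ G) : qperp (inA x) (inA (qst y)) -> qperp (inA y) (inA (qst x)) -> x = y.
Proof.
  qdestr x. qdestr y. rewrite !qst_cls, !qperp_AA. intros H1 H2.
  apply cls_eq. apply e_adj; apply dst_imp; auto.
Qed.

Lemma qm_c as_ G (x y : Q as_ G) : qperp (inA x) (inA y) <-> qperp (inA (qci x y)) tt_.
Proof.
  qdestr x. qdestr y. rewrite qci_cls, qperp_AA, qperp_At. apply EE_iff.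
  unfold fImp. apply E_St, E_Ci; [apply d_refl| apply E_dst].
Qed.

Lemma qm_d as_ G (x : Q as_ G) : qperp (inA x) tt_ <-> qperp (inA (qst x)) ff_.
Proof. qdestr x. rewrite qst_cls, qperp_At, qperp_Af. tauto. Qed.

Lemma qm_e as_ G (x y : Q as_ G) : (qperp (inA x) ff_ /\ qperp (inA y) ff_) <-> qperp (inA (qot x y)) ff_.
Proof.
  qdestr x. qdestr y. rewrite qot_cls, !qperp_Af. split.
  - intros [H1 H2]. apply e_adj; auto.
  - intro H. split. { eapply e_ote; exact H. }
    eapply e_ote. eapply d_tr; [apply E_Ot_comm| exact H].
Qed.

Lemma qm_f as_ G (x y : Q as_ G) : qperp (inA (qst (qci x (qst y)))) (inA (qst (qci x y))).
Proof.
  qdestr x. qdestr y. rewrite !qst_cls, !qci_cls, !qst_cls, qperp_AA.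
  eapply d_tr; [| apply e_ax, (A4 as_ x y)].
  apply E_imp; [apply d_refl| apply d_sym, E_dst].
Qed.

Lemma qm_g as_ G (x y : Q as_ G) : qperp (inA x) (inA y) -> qperp (inA x) ff_ -> qperp (inA y) tt_.
Proof. qdestr x. qdestr y. rewrite qperp_AA, qperp_Af, qperp_At. intros; eapply e_mp; eauto. Qed.

Lemma QA_imp as_ G a b : aImp (A := QA as_ G) (cls as_ G a) (cls as_ G b) = cls as_ G (fImp a b).
Proof. unfold aImp; simpl. rewrite qst_cls, qci_cls, qst_cls. reflexivity. Qed.

Lemma QA_iff as_ G a b : aIff (QA as_ G) (cls as_ G a) (cls as_ G b) = cls as_ G (fIff a b).
Proof. unfold aIff. rewrite !QA_imp. simpl. rewrite qot_cls. reflexivity. Qed.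

Lemma QA_niff3 as_ G a b c : aNIff3 (A := QA as_ G) (cls as_ G a) (cls as_ G b) (cls as_ G c) = cls as_ G (fNIff3 a b c).
Proof. unfold aNIff3, aNIff. rewrite !QA_iff. simpl. rewrite !qst_cls, !qot_cls. reflexivity. Qed.

Lemma qm_h as_ G (x y z : QA as_ G) :
  qperp (inA (aNIff3 x y z)) (inA (ast (aImp (aImp x y) (aImp (aImp y z) (aImp x z))))).
Proof.
  simpl in x, y, z. qdestr x. qdestr y. qdestr z.
  rewrite QA_niff3, !QA_imp. change (qperp (inA (cls as_ G (fNIff3 x y z))) (inA (qst (cls as_ G (fImp (fImp x y) (fImp (fImp y z) (fImp x z))))))). rewrite qst_cls, qperp_AA.
  eapply d_tr; [| apply e_ax, (A7 as_ x y z)].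
  apply E_imp; [apply d_refl| apply d_sym, E_dst].
Qed.

Definition QM as_ G : Nwmodel :=
  {| alg := QA as_ G; perp := @qperp as_ G;
     m_a := @qm_a as_ G; m_b := @qm_b as_ G; m_c := @qm_c as_ G; m_d := @qm_d as_ G;
     m_e := @qm_e as_ G; m_f := @qm_f as_ G; m_g := @qm_g as_ G; m_h := @qm_h as_ G |}.

Lemma QM_Nwd as_ G : in_Nwd (QM as_ G).
Proof.
  intros x y. simpl in x, y. qdestr x. qdestr y. simpl.
  unfold aOplus; simpl. rewrite !qst_cls, qot_cls, qst_cls.
  change (qperp (inA (cls as_ G x)) ff_ -> qperp (inA (cls as_ G (fOplus x y))) ff_).
  rewrite !qperp_Af. apply e_di.
Qed.

Lemma QM_Nd G : in_Nd (QM true G).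
Proof.
  split; [| apply QM_Nwd].
  intros x y z. simpl in x, y, z. qdestr x. qdestr y. qdestr z. simpl.
  rewrite !qot_cls. apply cls_eq. apply e_adj; apply e_ax; [apply Aas2| apply Aas1]; auto.
Qed.

Lemma cls_hom as_ G : is_hom (A := QA as_ G) (cls as_ G).
Proof.
  split; [|split]; intros; simpl; symmetry; auto using qot_cls, qci_cls, qst_cls.
Qed.

Lemma complete as_ (K : Nwmodel -> Prop) G p : K (QM as_ G) -> conseq K G p -> NeL_DIs as_ G p.
Proof.
  intros HK [L [HL S]].
  assert (H := S (QM as_ G) HK (cls as_ G) (cls_hom as_ G)).
  unfold Fperp in H. simpl in H. eapply qperp_Af. apply H.
  intros g Hg. unfold Fperp. simpl. apply qperp_Af. apply e_hyp, HL, Hg.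
Qed.

Lemma NL_NeL as_ p : NL_DI as_ p <-> NeL_DIs as_ (fun _ => False) p.
Proof.
  split; induction 1; eauto using NeL_DIs, NL_DI. contradiction.
Qed.

Lemma valid_conseq K p : valid K p <-> conseq K (fun _ => False) p.
Proof.
  split.
  - intro H. exists []. split; [intros g []|]. intros M KM h Hh _. apply H; auto.
  - intros [L [HL S]] M KM h Hh. apply S; auto. intros g Hg. destruct (HL g Hg).
Qed.

Lemma Nd_Nwd M : in_Nd M -> in_Nwd M.
Proof. intros [_ H]; exact H. Qed.

Theorem theorem5p11 :
  (forall (G : form -> Prop) (p : form), NeL_DIs false G p <-> conseq in_Nwd G p) /\
  (forall (G : form -> Prop) (p : form), NeL_DIs true G p <-> conseq in_Nd G p) /\
  (forall p : form, NL_DI false p <-> valid in_Nwd p) /\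
  (forall p : form, NL_DI true p <-> valid in_Nd p).
Proof.
  assert (P1 : forall (G : form -> Prop) (p : form), NeL_DIs false G p <-> conseq in_Nwd G p).
  { intros G p; split.
    - apply sound; auto. discriminate.
    - apply complete, QM_Nwd. }
  assert (P2 : forall (G : form -> Prop) (p : form), NeL_DIs true G p <-> conseq in_Nd G p).
  { intros G p; split.
    - apply sound. { apply Nd_Nwd. } intros _ M [HM _]; exact HM.
    - apply complete, QM_Nd. }
  split; [exact P1|]. split; [exact P2|].
  split; intro p; rewrite NL_NeL, valid_conseq; auto.
Qed.
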